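(* Let $R=(r_{st})$ be an $n\times n$ matrix over the complex numbers ($n\ge 2$). For $1\le i,j\le n$ let $R_{ij}$ be the matrix obtained from $R$ by replacing the $(i,j)$ entry by $0$ (all other entries unchanged). Let $l$ be the number of nonzero entries of $R$. Then $$(l-n)\,d_2(R)=\sum_{(i,j)\in I} d_2(R_{ij}),$$ where $I=\{(i,j): r_{ij}\ne 0,\ 1\le i,j\le n\}$.
   Context: For an $n\times n$ matrix $M=(m_{ij})$ ($n\ge 2$), the second immanant is $d_2(M)=\sum_{\sigma\in S_n}\chi_2(\sigma)\prod_{s=1}^n m_{s\sigma(s)}$, where $\chi_2$ is the irreducible character of the symmetric group $S_n$ corresponding to the partition $(2,1^{n-2})$. *)

(* Defs.v *)
From HB Require Import structures.
From mathcomp Require Import all_boot all_order all_algebra all_fingroup.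
Set Implicit Arguments. Unset Strict Implicit. Unset Printing Implicit Defensive.
Import GRing.Theory Num.Theory.
Local Open Scope ring_scope.

(* chi2 s : value at s of the irreducible character of S_n for the
   partition (2,1^(n-2)), i.e. sign(s) * (number of fixed points of s - 1)
   (the standard character (n-1,1) tensored with the sign character). *)
Definition chi2 (R : comRingType) (n : nat) (s : 'S_n) : R :=
  (-1) ^+ s * (#|[set i : 'I_n | s i == i]|%:R - 1).

Definition d2 (R : comRingType) (n : nat) (M : 'M[R]_n) : R :=
  \sum_(s : 'S_n) chi2 R s * \prod_(i < n) M i (s i).

Definition zero_entry (R : comRingType) (n : nat) (M : 'M[R]_n) (i j : 'I_n)
  : 'M[R]_n :=
  \matrix_(s, t) (if (s == i) && (t == j) then 0 else M s t).

Definition nz_support (R : comRingType) (n : nat) (M : 'M[R]_n)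
  : {set 'I_n * 'I_n} :=
  [set p : 'I_n * 'I_n | M p.1 p.2 != 0].

(* Main.v *)
Require Import Defs.
From HB Require Import structures.
From mathcomp Require Import all_boot all_order all_algebra all_fingroup.
Import GRing.Theory Num.Theory.
Local Open Scope ring_scope.

Lemma key (C : comRingType) (n : nat) (R : 'M[C]_n) (s : 'S_n) :
  \sum_(p in nz_support R) \prod_(i < n) zero_entry R p.1 p.2 i (s i)
  = ((#|nz_support R|)%:R - n%:R) * \prod_(i < n) R i (s i).
Proof.
set S := nz_support R.
set G := [set (i, s i) | i : 'I_n].
have memG : forall p : 'I_n * 'I_n, (p \in G) = (p.2 == s p.1).
  move=> [a b] /=; apply/imsetP/eqP => [[i _ [-> ->]] // | ->].
  by exists a.
have cG : #|G| = n by rewrite card_imset ?card_ord // => i j [].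
have E : forall p : 'I_n * 'I_n, \prod_(i < n) zero_entry R p.1 p.2 i (s i)
   = if p \in G then 0 else \prod_(i < n) R i (s i).
  move=> p; rewrite memG; case: eqP => [e|ne].
    rewrite (bigD1 p.1) //= mxE eqxx -e eqxx /= mul0r //.
  apply: eq_bigr => i _; rewrite mxE.
  case: eqP => [ei|] //=; case: eqP => //= ej.
  by exfalso; apply: ne; rewrite -ej ei.
under eq_bigr => p _ do rewrite E.
set P := \prod_(i < n) R i (s i).
have [P0|Pn0] := eqVneq P 0.
  by rewrite P0 mulr0; apply: big1 => p _; case: ifP.
have GS : G \subset S.
  apply/subsetP => p; rewrite memG inE => /eqP ->.
  apply: contra Pn0 => /eqP h; apply/eqP; rewrite /P (bigD1 p.1) //= h mul0r //.
rewrite (big_setID G) /= big1; last by move=> p /setIP [_ ->].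
rewrite add0r (eq_bigr (fun _ => P)); last by move=> p /setDP [_ /negbTE ->].
rewrite sumr_const cardsD (setIidPr GS) cG -natrB; last by rewrite -[X in (X <= _)%N]cG subset_leq_card.
by rewrite mulr_natl.
Qed.

Theorem corollary3p4 (C : numClosedFieldType) (n : nat) (hn : (2 <= n)%N)
    (R : 'M[C]_n) :
  ((#|nz_support R|)%:R - n%:R) * d2 R
    = \sum_(p in nz_support R) d2 (zero_entry R p.1 p.2).
Proof.
rewrite /d2 exchange_big /= mulr_sumr; apply: eq_bigr => s _.
by rewrite -mulr_sumr key mulrCA.
Qed.
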